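(* $\mathfrak{L}(BS(1,2)) \not\subseteq \mathsf{CF}$; that is, some language recognized by a $BS(1,2)$-automaton is not context-free.
   Context: For a group $G$ with identity $e$, a $G$-automaton is a tuple $(Q,\Sigma,G,\delta,q_0,Q_a)$ where $Q$ is a finite set of states, $\Sigma$ a finite input alphabet, $q_0\in Q$ the initial state, $Q_a\subseteq Q$ the accepting states, and $\delta$ assigns to each $(q,\sigma)\in Q\times(\Sigma\cup\{\varepsilon\})$ a finite set of pairs $(q',m)\in Q\times G$. The register holds an element of $G$, initially $e$; using a transition $(q',m)\in\delta(q,\sigma)$ the automaton reads $\sigma$ (or nothing), moves to $q'$ and replaces the register content $x$ by $xm$. A word is accepted if some computation reads it entirely and ends in an accepting state with register equal to $e$. $\mathfrak{L}(G)$ is the class of languages recognized by $G$-automata. $BS(1,2)$ is the Baumslag–Solitar group $\langle a,b\mid bab^{-1}=a^2\rangle$. $\mathsf{CF}$ is the class of context-free languages. *)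

(* Defs.v *)
From mathcomp Require Import all_boot all_order all_algebra.
From Stdlib Require List.
Set Implicit Arguments.
Unset Strict Implicit.
Unset Printing Implicit Defensive.
Import Order.TTheory GRing.Theory Num.Theory.
Local Open Scope ring_scope.

(* BS(1,2) = <a,b | b a b^-1 = a^2> is realised (faithfully) as the group of
   affine maps t |-> 2^k t + r of Q with k : int and r a dyadic rational
   (a = t |-> t+1, b = t |-> 2t).  An element is the pair (k, r); the product
   is composition (x * y)(t) = x (y t). We use the ambient group Z |x Q on
   int * rat and single out BS(1,2) as the subgroup of pairs with dyadic r. *)

Definition dyadic (r : rat) : Prop :=
  exists (n : int) (e : nat), r = n%:~R / (2%:R ^+ e).

Definition in_BS12 (g : int * rat) : Prop := dyadic g.2.

Definition aff_mul (x y : int * rat) : int * rat :=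
  (x.1 + y.1, x.2 + (2%:R : rat) ^ x.1 * y.2).

Definition aff_one : int * rat := (0, 0).

Definition BS_a : int * rat := (0, 1).
Definition BS_b : int * rat := (1, 0).

Lemma BS_relation : aff_mul (aff_mul BS_b BS_a) (-1, 0) = aff_mul BS_a BS_a.
Proof.
rewrite /aff_mul /BS_a /BS_b /=.
congr pair.

Qed.

(* delta q s (s = None for epsilon) is the finite list of pairs (q', m). *)
Record GAut (G : Type) (Sigma : finType) := {
  gstate : finType;
  ginit : gstate;
  gacc : pred gstate;
  gdelta : gstate -> option Sigma -> seq (gstate * G)
}.

Section Runs.
Variables (G : Type) (mul : G -> G -> G) (e : G) (Sigma : finType).
Variable A : GAut G Sigma.

Inductive runs : gstate A -> G -> seq Sigma -> gstate A -> G -> Prop :=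
| runs_nil q x : runs q x [::] q x
| runs_eps q x w q1 m q' y :
    List.In (q1, m) (@gdelta _ _ A q None) ->
    runs q1 (mul x m) w q' y -> runs q x w q' y
| runs_sym q x a w q1 m q' y :
    List.In (q1, m) (@gdelta _ _ A q (Some a)) ->
    runs q1 (mul x m) w q' y -> runs q x (a :: w) q' y.

Definition gaccepts (w : seq Sigma) : Prop :=
  exists2 q, runs (@ginit _ _ A) e w q e & @gacc _ _ A q.
End Runs.

Definition is_BS12_aut (Sigma : finType) (A : GAut (int * rat) Sigma) : Prop :=
  forall q s p, List.In p (@gdelta _ _ A q s) -> in_BS12 p.2.

Definition BS12_lang (Sigma : finType) (A : GAut (int * rat) Sigma)
  : seq Sigma -> Prop := gaccepts aff_mul aff_one A.

Record CFG (Sigma : finType) := {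
  nonterm : finType;
  start : nonterm;
  rules : seq (nonterm * seq (nonterm + Sigma))
}.

Section CFGsem.
Variables (Sigma : finType) (g : CFG Sigma).

Inductive derive1 : seq (nonterm g + Sigma) -> seq (nonterm g + Sigma) -> Prop :=
| derive1_rule u v X rhs :
    List.In (X, rhs) (rules g) -> derive1 (u ++ inl X :: v) (u ++ rhs ++ v).

Inductive derives : seq (nonterm g + Sigma) -> seq (nonterm g + Sigma) -> Prop :=
| derives_refl s : derives s s
| derives_step s t u : derive1 s t -> derives t u -> derives s u.

Definition cfg_lang (w : seq Sigma) : Prop :=
  derives [:: inl (start g)] (map inr w).
End CFGsem.

Definition context_free (Sigma : finType) (L : seq Sigma -> Prop) : Prop :=
  exists g : CFG Sigma, forall w, L w <-> cfg_lang g w.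

(* Main.v *)
Require Import Defs.
From mathcomp Require Import all_boot all_order all_algebra ring zify.
Set Implicit Arguments.
Unset Strict Implicit.
Unset Printing Implicit Defensive.

Section Gram.
Variable g : CFG unit.
Local Notation N := (nonterm g).
Local Notation sym := (N + unit)%type.

Inductive gen : N -> nat -> Prop :=
| gen_rule X rhs n : List.In (X, rhs) (rules g) -> genl rhs n -> gen X n
with genl : seq sym -> nat -> Prop :=
| genl_nil : genl [::] 0
| genl_t a r n : genl r n -> genl (inr a :: r) n.+1
| genl_n Y r m n : gen Y m -> genl r n -> genl (inl Y :: r) (m + n).

Scheme gen_ind2 := Induction for gen Sort Prop
with genl_ind2 := Induction for genl Sort Prop.

Lemma genl_cat s t a b : genl s a -> genl t b -> genl (s ++ t) (a + b).
Proof.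
elim=> //= [a' r n _ IH|Y r m n gY _ IH] Ht.
  by rewrite addSn; apply: genl_t; apply: IH.
by rewrite -addnA; apply: genl_n => //; apply: IH.
Qed.

Lemma genl_catI s t n : genl (s ++ t) n -> exists a b, [/\ n = a + b, genl s a & genl t b].
Proof.
elim: s n => [|x s IH] n /=.
  by move=> H; exists 0, n; split=> //; apply: genl_nil.
move=> H; inversion H; subst.
  have [a1 [b1 [-> Ha Hb]]] := IH _ H3.
  by exists a1.+1, b1; split=> //; apply: genl_t.
have [a1 [b1 [-> Ha Hb]]] := IH _ H4.
by exists (m + a1), b1; split; [rewrite addnA| apply: genl_n|].
Qed.

Inductive ctx : N -> N -> nat -> Prop :=
| ctx_refl X : ctx X X 0
| ctx_step X l Z r Y a b c : List.In (X, l ++ inl Z :: r) (rules g) ->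
    genl l a -> genl r b -> ctx Z Y c -> ctx X Y (a + b + c).

Lemma ctx_gen X Y c m : ctx X Y c -> gen Y m -> gen X (c + m).
Proof.
elim=> // {X Y c} X l Z r Y a b c Hin Hl Hr _ IH HY.
apply: gen_rule Hin _.
have -> : a + b + c + m = a + ((c + m) + b) by lia.
apply: genl_cat => //; exact: genl_n (IH HY) Hr.
Qed.

Lemma ctx_trans X Y Z c d : ctx X Y c -> ctx Y Z d -> ctx X Z (c + d).
Proof.
elim=> // {X Y c} X l Z' r Y a b c Hin Hl Hr _ IH HY.
by rewrite -addnA; apply: ctx_step Hin Hl Hr (IH HY).
Qed.

Lemma ctx_pump X c k : ctx X X c -> ctx X X (k * c).
Proof.
move=> H; elim: k => [|k IH]; first exact: ctx_refl.
by rewrite mulSn; apply: ctx_trans H IH.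
Qed.

Lemma genl_map w : genl (map inr w) (size w).
Proof. by elim: w => [|a w IH] /=; [apply: genl_nil| apply: genl_t]. Qed.

Lemma derive1_genl s t n : derive1 s t -> genl t n -> genl s n.
Proof.
case=> u v X rhs Hin H.
have [a [b [-> Ha Hb]]] := genl_catI H.
have [c [d [-> Hc Hd]]] := genl_catI Hb.
apply: genl_cat => //; exact: genl_n (gen_rule Hin Hc) Hd.
Qed.

Lemma derives_genl s w : derives s (map inr w) -> genl s (size w).
Proof.
move Et: (map inr w) => t H; elim: H Et => [s' <-|s' t' u H1 _ IH Et].
  exact: genl_map.
exact: derive1_genl H1 (IH Et).
Qed.

Lemma derive1_ctx (u v s t : seq sym) : derive1 s t -> derive1 (u ++ s ++ v) (u ++ t ++ v).
Proof.
case=> u0 v0 X rhs Hin.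
have := derive1_rule (u ++ u0) (v0 ++ v) Hin.
by rewrite -!catA /=.
Qed.

Lemma derives_ctx (u v s t : seq sym) : derives s t -> derives (u ++ s ++ v) (u ++ t ++ v).
Proof.
elim=> [s'|s' t' w H1 _ IH]; first exact: derives_refl.
exact: derives_step (derive1_ctx u v H1) IH.
Qed.

Lemma derives_trans (s t u : seq sym) : derives s t -> derives t u -> derives s u.
Proof. by elim=> // s' t' w H1 _ IH Hu; apply: derives_step H1 (IH Hu). Qed.

Definition tw n : seq sym := map inr (nseq n tt).

Lemma gen_derives :
  (forall X n, gen X n -> derives [:: inl X] (tw n)) /\
  (forall s n, genl s n -> derives s (tw n)).
Proof.
pose P := fun X n (_ : gen X n) => derives [:: inl X] (tw n).
pose Q := fun s n (_ : genl s n) => derives s (tw n).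
have c1 : forall X rhs n (i : List.In (X, rhs) (rules g)) (gl : genl rhs n), Q rhs n gl -> P X n (gen_rule i gl).
  move=> X rhs n Hin gl IH; rewrite /P /Q in IH *; apply: derives_step IH.
  by have := derive1_rule [::] [::] Hin; rewrite /= cats0.
have c2 : Q [::] 0 genl_nil by exact: derives_refl.
have c3 : forall a r n (gl : genl r n), Q r n gl -> Q (inr a :: r) n.+1 (genl_t a gl).
  move=> [] r n gl IH; rewrite /Q in IH *.
  by have := derives_ctx [:: inr tt] [::] IH; rewrite /= !cats0.
have c4 : forall Y r m n (gy : gen Y m), P Y m gy -> forall (gl : genl r n), Q r n gl -> Q (inl Y :: r) (m + n) (genl_n gy gl).
  move=> Y r m n gy IHY gl IHr; rewrite /P /Q in IHY IHr *.
  have H1 := derives_ctx [::] r IHY; rewrite /= in H1.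
  have H2 := derives_ctx (tw m) [::] IHr; rewrite cats0 in H2.
  rewrite /tw nseqD map_cat; apply: derives_trans H1 _; by move: H2; rewrite /tw cats0.
split=> [X n H|s n H]; [exact: (gen_ind2 c1 c2 c3 c4 H) | exact: (genl_ind2 c1 c2 c3 c4 H)].
Qed.


Inductive gp : {set N} -> N -> nat -> Prop :=
| gp_rule (V : {set N}) X rhs n : X \notin V -> List.In (X, rhs) (rules g) -> gpl (X |: V) rhs n -> gp V X n
with gpl : {set N} -> seq sym -> nat -> Prop :=
| gpl_nil (W : {set N}) : gpl W [::] 0
| gpl_t W a r n : gpl W r n -> gpl W (inr a :: r) n.+1
| gpl_n W Y r m n : gp W Y m -> gpl W r n -> gpl W (inl Y :: r) (m + n).

Scheme gp_ind2 := Induction for gp Sort Prop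
with gpl_ind2 := Induction for gpl Sort Prop.

Lemma gp_gen : (forall V X n, gp V X n -> gen X n) /\ (forall W s n, gpl W s n -> genl s n).
Proof.
pose P := fun V X n (_ : gp V X n) => gen X n.
pose Q := fun W s n (_ : gpl W s n) => genl s n.
have c1 : forall (V : {set N}) X rhs n (h : X \notin V) (i : List.In (X, rhs) (rules g)) (gl : gpl (X |: V) rhs n), Q _ rhs n gl -> P V X n (gp_rule h i gl).
  by move=> V X rhs n h i gl IH; apply: gen_rule i IH.
have c2 : forall W, Q W [::] 0 (gpl_nil W) by move=> W; exact: genl_nil.
have c3 : forall W a r n (gl : gpl W r n), Q W r n gl -> Q W (inr a :: r) n.+1 (gpl_t a gl).
  by move=> W a r n gl IH; apply: genl_t.
have c4 : forall W Y r m n (gy : gp W Y m), P W Y m gy -> forall (gl : gpl W r n), Q W r n gl -> Q W (inl Y :: r) (m + n) (gpl_n gy gl).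
  by move=> W Y r m n gy IHY gl IHr; apply: genl_n.
split=> [V X n H|W s n H]; [exact: (gp_ind2 c1 c2 c3 c4 H) | exact: (gpl_ind2 c1 c2 c3 c4 H)].
Qed.

Lemma gp_anti : (forall V X n, gp V X n -> forall V' : {set N}, V' \subset V -> gp V' X n) /\
  (forall W s n, gpl W s n -> forall W' : {set N}, W' \subset W -> gpl W' s n).
Proof.
pose P := fun V X n (_ : gp V X n) => forall V' : {set N}, V' \subset V -> gp V' X n.
pose Q := fun W s n (_ : gpl W s n) => forall W' : {set N}, W' \subset W -> gpl W' s n.
have c1 : forall (V : {set N}) X rhs n (h : X \notin V) (i : List.In (X, rhs) (rules g)) (gl : gpl (X |: V) rhs n), Q _ rhs n gl -> P V X n (gp_rule h i gl).
  move=> V X rhs n h i gl IH V' sV; apply: gp_rule i _.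
    by apply: contra h; apply: (subsetP sV).
  by apply: IH; apply: setUS.
have c2 : forall W, Q W [::] 0 (gpl_nil W) by move=> W W' _; exact: gpl_nil.
have c3 : forall W a r n (gl : gpl W r n), Q W r n gl -> Q W (inr a :: r) n.+1 (gpl_t a gl).
  by move=> W a r n gl IH W' sW; apply: gpl_t; apply: IH.
have c4 : forall W Y r m n (gy : gp W Y m), P W Y m gy -> forall (gl : gpl W r n), Q W r n gl -> Q W (inl Y :: r) (m + n) (gpl_n gy gl).
  by move=> W Y r m n gy IHY gl IHr W' sW; apply: gpl_n; [apply: IHY|apply: IHr].
split=> [V X n H|W s n H]; [exact: (gp_ind2 c1 c2 c3 c4 H) | exact: (gpl_ind2 c1 c2 c3 c4 H)].
Qed.

Section Occ.
Variable X0 : N.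

Lemma occ : (forall V Y m, gp V Y m -> gp (X0 |: V) Y m \/
      exists c m', [/\ ctx Y X0 c, gp set0 X0 m' & m = c + m']) /\
  (forall W s m, gpl W s m -> gpl (X0 |: W) s m \/
      exists l Z r a b c m', [/\ s = l ++ inl Z :: r, genl l a, genl r b, ctx Z X0 c & gp set0 X0 m' /\ m = a + b + c + m']).
Proof.
pose P := fun V Y m (_ : gp V Y m) => gp (X0 |: V) Y m \/
      exists c m', [/\ ctx Y X0 c, gp set0 X0 m' & m = c + m'].
pose Q := fun W s m (_ : gpl W s m) => gpl (X0 |: W) s m \/
      exists l Z r a b c m', [/\ s = l ++ inl Z :: r, genl l a, genl r b, ctx Z X0 c & gp set0 X0 m' /\ m = a + b + c + m'].
have c1 : forall (V : {set N}) X rhs n (h : X \notin V) (i : List.In (X, rhs) (rules g)) (gl : gpl (X |: V) rhs n), Q _ rhs n gl -> P V X n (gp_rule h i gl).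
  move=> V X rhs n h i gl IH; rewrite /P.
  have [EX|NX] := eqVneq X X0.
    right; exists 0, n; split=> //; first by rewrite EX; exact: ctx_refl.
    by rewrite -EX; apply: gp_anti.1 (gp_rule h i gl) _ (sub0set _).
  case: IH => [H|[l [Z [r [a [b [c [m' [E Hl Hr Hc [Hm HE]]]]]]]]]].
    left; apply: gp_rule i _; first by rewrite in_setU1 negb_or NX.
    by rewrite setUCA.
  right; exists (a + b + c), m'; split=> //.
  by subst rhs; apply: ctx_step i Hl Hr Hc.
have c2 : forall W, Q W [::] 0 (gpl_nil W) by move=> W; left; exact: gpl_nil.
have c3 : forall W a r n (gl : gpl W r n), Q W r n gl -> Q W (inr a :: r) n.+1 (gpl_t a gl).
  move=> W a r n gl [H|[l [Z [r' [a' [b [c [m' [E Hl Hr Hc [Hm HE]]]]]]]]]].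
    by left; apply: gpl_t.
  right; exists (inr a :: l), Z, r', a'.+1, b, c, m'; split=> //.
  - by rewrite E.
  - exact: genl_t.
  - by rewrite HE.
have c4 : forall W Y r m n (gy : gp W Y m), P W Y m gy -> forall (gl : gpl W r n), Q W r n gl -> Q W (inl Y :: r) (m + n) (gpl_n gy gl).
  move=> W Y r m n gy IHY gl IHr.
  case: IHY => [HY|[c [m' [Hc Hm HE]]]].
    case: IHr => [Hr|[l [Z [r' [a' [b [c [m' [E Hl Hr Hc [Hm HE]]]]]]]]]].
      by left; apply: gpl_n.
    right; exists (inl Y :: l), Z, r', (m + a'), b, c, m'; split=> //.
    - by rewrite E.
    - exact: genl_n (gp_gen.1 _ _ _ gy) Hl.
    - by split=> //; rewrite HE; lia.
  right; exists [::], Y, r, 0, n, c, m'; split=> //.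
  - exact: genl_nil.
  - exact: gp_gen.2 _ _ _ gl.
  - by split=> //; rewrite HE; lia.
split=> [V X n H|W s n H]; [exact: (gp_ind2 c1 c2 c3 c4 H) | exact: (gpl_ind2 c1 c2 c3 c4 H)].
Qed.
End Occ.

Definition Pump X := exists Y d c l, [/\ 0 < c, ctx X Y d, ctx Y Y c & gen Y l].

Lemma main_dich : (forall X n, gen X n -> gp set0 X n \/ Pump X) /\
  (forall s n, genl s n -> gpl set0 s n \/ exists l Z r a b, [/\ s = l ++ inl Z :: r, genl l a, genl r b & Pump Z]).
Proof.
pose P := fun X n (_ : gen X n) => gp set0 X n \/ Pump X.
pose Q := fun s n (_ : genl s n) => gpl set0 s n \/ exists l Z r a b, [/\ s = l ++ inl Z :: r, genl l a, genl r b & Pump Z].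
have c1 : forall X rhs n (i : List.In (X, rhs) (rules g)) (gl : genl rhs n), Q rhs n gl -> P X n (gen_rule i gl).
  move=> X rhs n i gl [H|[l [Z [r [a [b [E Hl Hr [Y [d [c [m [c0 H1 H2 H3]]]]]]]]]]]]; rewrite /P.
    case: ((occ X).2 _ _ _ H) => [H'|[l [Z [r [a [b [c [m' [E Hl Hr Hc [Hm HE]]]]]]]]]].
      by left; apply: gp_rule i H'; rewrite in_set0.
    have Hx : ctx X X (a + b + c) by subst rhs; apply: ctx_step i Hl Hr Hc.
    case: (posnP (a + b + c)) => [E0|P0].
      by left; rewrite HE E0.
    right; exists X, 0, (a + b + c), m'; split=> //; first exact: ctx_refl.
    exact: gp_gen.1 _ _ _ Hm.
  right; exists Y, (a + b + d), c, m; split=> //.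
  by subst rhs; apply: ctx_step i Hl Hr H1.
have c2 : Q [::] 0 genl_nil by left; exact: gpl_nil.
have c3 : forall a r n (gl : genl r n), Q r n gl -> Q (inr a :: r) n.+1 (genl_t a gl).
  move=> a r n gl [H|[l [Z [r' [a' [b [E Hl Hr HP]]]]]]].
    by left; apply: gpl_t.
  right; exists (inr a :: l), Z, r', a'.+1, b; split=> //; first by rewrite E.
  exact: genl_t.
have c4 : forall Y r m n (gy : gen Y m), P Y m gy -> forall (gl : genl r n), Q r n gl -> Q (inl Y :: r) (m + n) (genl_n gy gl).
  move=> Y r m n gy IHY gl IHr.
  case: IHY => [HY|HP].
    case: IHr => [Hr|[l [Z [r' [a' [b [E Hl Hr HP]]]]]]].
      by left; apply: gpl_n.
    right; exists (inl Y :: l), Z, r', (m + a'), b; split=> //; first by rewrite E.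
    exact: genl_n gy Hl.
  right; exists [::], Y, r, 0, n; split=> //; exact: genl_nil.
split=> [X n H|s n H]; [exact: (gen_ind2 c1 c2 c3 c4 H) | exact: (genl_ind2 c1 c2 c3 c4 H)].
Qed.

Definition Bd := (sumn [seq size p.2 | p <- rules g]).+1.

Lemma rule_size X rhs : List.In (X, rhs) (rules g) -> size rhs <= Bd.
Proof.
rewrite /Bd; elim: (rules g) => [|p ps IH] //= [->|H] /=.
  by apply: leq_trans (leq_addr _ _) (leqnSn _).
apply: leq_trans (IH H) _; rewrite ltnS; exact: leq_addl.
Qed.

Lemma gp_bound : (forall V X n, gp V X n -> n <= Bd ^ (#|N| - #|V|)) /\
  (forall W s n, gpl W s n -> n <= size s * Bd ^ (#|N| - #|W|)).
Proof.
pose P := fun V X n (_ : gp V X n) => n <= Bd ^ (#|N| - #|V|).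
pose Q := fun W s n (_ : gpl W s n) => n <= size s * Bd ^ (#|N| - #|W|).
have c1 : forall (V : {set N}) X rhs n (h : X \notin V) (i : List.In (X, rhs) (rules g)) (gl : gpl (X |: V) rhs n), Q _ rhs n gl -> P V X n (gp_rule h i gl).
  move=> V X rhs n h i gl IH; rewrite /P /Q in IH *.
  have := max_card (X |: V); rewrite cardsU1 h /= => Hc.
  rewrite cardsU1 h /= in IH.
  have E : #|N| - #|V| = (#|N| - (1 + #|V|)).+1.
    by rewrite addnC subnDA subn1 prednK // subn_gt0 -add1n.
  rewrite E expnS; apply: leq_trans IH _; rewrite leq_mul2r.
  by rewrite (rule_size i) orbT.
have c2 : forall W, Q W [::] 0 (gpl_nil W) by move=> W; rewrite /Q.
have c3 : forall W a r n (gl : gpl W r n), Q W r n gl -> Q W (inr a :: r) n.+1 (gpl_t a gl).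
  move=> W a r n gl IH; rewrite /Q /= in IH *.
  have : 0 < Bd ^ (#|N| - #|W|) by rewrite expn_gt0.
  rewrite mulSn; move: IH; move: (Bd ^ _) => K; lia.
have c4 : forall W Y r m n (gy : gp W Y m), P W Y m gy -> forall (gl : gpl W r n), Q W r n gl -> Q W (inl Y :: r) (m + n) (gpl_n gy gl).
  move=> W Y r m n gy IHY gl IHr; rewrite /P /Q /= in IHY IHr *.
  rewrite mulSn; move: IHY IHr; move: (Bd ^ _) => K; lia.
split=> [V X n H|W s n H]; [exact: (gp_ind2 c1 c2 c3 c4 H) | exact: (gpl_ind2 c1 c2 c3 c4 H)].
Qed.

End Gram.

Import GRing.Theory Num.Theory.

Local Open Scope ring_scope.

Definition s0 : 'I_4 := @Ordinal 4 0 isT.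
Definition s1 : 'I_4 := @Ordinal 4 1 isT.
Definition s2 : 'I_4 := @Ordinal 4 2 isT.
Definition s3 : 'I_4 := @Ordinal 4 3 isT.

Definition reg (k : int) (r : rat) : int * rat := (k, r).

Definition delta (q : 'I_4) (s : option unit) : seq ('I_4 * (int * rat)) :=
  match nat_of_ord q, s with
  | 0%N, None => [:: (s0, reg (-1) 0); (s1, reg 0 0)]
  | 1%N, Some _ => [:: (s1, reg 0 1)]
  | 1%N, None => [:: (s2, reg 0 0)]
  | 2%N, None => [:: (s2, reg 1 0); (s3, reg 0 (-1))]
  | _, _ => [::]
  end.

Definition Aut : GAut (int * rat) unit :=
  {| gstate := 'I_4; ginit := s0; gacc := fun q => q == s3; gdelta := delta |}.

Lemma Aut_BS : is_BS12_aut Aut.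
Proof.
have H r : r \in [:: 0; 1; -1] -> in_BS12 (reg 0 r).
  move=> Hr; exists (numq r), 0%N; rewrite expr0 divr1.
  by move: Hr; rewrite !inE => /or3P [] /eqP ->.
move=> [[|[|[|[|k]]]] Hk] [[]|] [q m] //=;
  rewrite /= ?inE; do ![case=> [[_ <-]|]] => //; try by apply: H; rewrite !inE eqxx ?orbT.
all: by exists 0, 0%N; rewrite expr0 divr1.
Qed.

Local Notation R := (runs aff_mul (A:=Aut)).

Definition Inv (q : 'I_4) (x : int * rat) (w : seq unit) : Prop :=
  match nat_of_ord q with
  | 0%N => x.2 = 0 -> exists j : nat, (size w)%:R * (2%:R : rat) ^ (x.1 - j%:Z) = 1
  | 1%N => x.2 + (size w)%:R * (2%:R : rat) ^ x.1 = 1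
  | 2%N => w = [::] /\ x.2 = 1
  | 3%N => w = [::] /\ x = (0, 0)
  | _ => True
  end.

Lemma inv_runs q x w q' y : R q x w q' y -> q' = s3 -> y = (0, 0) -> Inv q x w.
Proof.
elim=> {q x w q' y}.
- by move=> q x -> ->.
- move=> [[|[|[|[|k]]]] Hk] [k0 r] w q1 m q' y //= Hin _ IH E1 E2; have := IH E1 E2;
   move: Hin => /=; do ![case=> [[<- <-]|]] => //=.
  all: rewrite /Inv /aff_mul /reg /=.
  + move=> H Hr; rewrite Hr mulr0 addr0 in H; have [j Hj] := H erefl.
    exists j.+1; apply: etrans Hj; congr (_ * _); congr (_ ^ _); lia.
  + move=> H Hr; exists 0%N; move: H; rewrite Hr mulr0 !addr0 add0r => H.
    apply: etrans H; congr (_ * _); congr (_ ^ _); lia.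
  + by case=> ->; rewrite mulr0 addr0 /= mul0r addr0.
  + by case=> ->; rewrite mulr0 addr0.
  + case=> -> [E3]; rewrite addr0 in E3; rewrite E3 expr0z => E4.
    by split=> //; move/eqP: E4; rewrite mul1r subr_eq0 => /eqP.
- move=> [[|[|[|[|k]]]] Hk] [k0 r] a w q1 m q' y //= Hin _ IH E1 E2; have := IH E1 E2;
   move: Hin => /=; do ![case=> [[<- <-]|]] => //=.
  move=> H; apply: etrans H; rewrite addr0 -addn1 natrD; ring.
Qed.

Lemma sound w : BS12_lang Aut w -> exists j, size w = (2 ^ j)%N.
Proof.
case=> q Hr Hq; have := inv_runs Hr (eqP Hq) erefl.
rewrite /Inv /= => H; have [j Hj] := H erefl.
exists j; move: Hj; rewrite sub0r -exprnN => Hj.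
have : (size w)%:R = (2%:R : rat) ^+ j.
  apply: (mulIf (x := (2%:R : rat) ^- j)); first by rewrite invr_eq0 expf_neq0.
  by rewrite Hj mulfV // expf_neq0.
by rewrite -natrX => /eqP; rewrite eqr_nat => /eqP.
Qed.

Lemma runs_eps' q x w q1 m q' y x' : List.In (q1, m) (delta q None) ->
  aff_mul x m = x' -> R q1 x' w q' y -> R q x w q' y.
Proof. by move=> H E; rewrite -E; apply: runs_eps. Qed.

Lemma runs_sym' q x a w q1 m q' y x' : List.In (q1, m) (delta q (Some a)) ->
  aff_mul x m = x' -> R q1 x' w q' y -> R q x (a :: w) q' y.
Proof. by move=> H E; rewrite -E; apply: runs_sym. Qed.

Lemma R2 (j : nat) : R s2 (reg (- (j%:Z)) 1) [::] s3 aff_one.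
Proof.
elim: j => [|j IH].
  apply: (@runs_eps' _ _ _ s3 (reg 0 (-1))); first by right; left.
    by rewrite /aff_mul /reg /aff_one /= oppr0 addr0 expr0z mul1r addrN.
  exact: runs_nil.
apply: (@runs_eps' _ _ _ s2 (reg 1 0) _ _ (reg (- (j%:Z)) 1)); first by left.
  by rewrite /aff_mul /reg /= mulr0 addr0; congr pair; lia.
exact: IH.
Qed.

Lemma R1 (j : nat) (m : nat) (r : rat) : r + m%:R * (2%:R : rat) ^ (- (j%:Z)) = 1 ->
  R s1 (reg (- (j%:Z)) r) (nseq m tt) s3 aff_one.
Proof.
elim: m r => [|m IH] r /= Hr.
  apply: (@runs_eps' _ _ _ s2 (reg 0 0) _ _ (reg (- (j%:Z)) 1)); first by left.
    by rewrite /aff_mul /reg /= mulr0 !addr0 -Hr mul0r addr0.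
  exact: R2.
apply: (@runs_sym' _ _ _ _ s1 (reg 0 1) _ _ (reg (- (j%:Z)) (r + (2%:R : rat) ^ (- (j%:Z))))); first by left.
  by rewrite /aff_mul /reg /= mulr1 addr0.
apply: IH; apply: etrans Hr; rewrite -addn1 natrD; ring.
Qed.

Lemma R0 (n d i : nat) : (i + d)%N = n -> R s0 (reg (- (i%:Z)) 0) (nseq (2 ^ n) tt) s3 aff_one.
Proof.
elim: d i => [|d IH] i Hi.
  rewrite addn0 in Hi; subst i.
  apply: (@runs_eps' _ _ _ s1 (reg 0 0) _ _ (reg (- (n%:Z)) 0)); first by right; left.
    by rewrite /aff_mul /reg /= mulr0 !addr0.
  by apply: R1; rewrite add0r natrX -exprnN mulfV // expf_neq0.
apply: (@runs_eps' _ _ _ s0 (reg (-1) 0) _ _ (reg (- (i.+1%:Z)) 0)); first by left.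
  by rewrite /aff_mul /reg /= mulr0 addr0; congr pair; lia.
by apply: IH; rewrite -Hi; lia.
Qed.

Lemma complete n : BS12_lang Aut (nseq (2 ^ n) tt).
Proof.
exists s3 => //.
have := R0 (n := n) (d := n) (i := 0) (add0n _).
by rewrite /reg oppr0.
Qed.

Local Close Scope ring_scope.

Lemma pow2_contra d c l : 0 < c ->
  (forall k, exists i, d + (k * c + l) = 2 ^ i) -> False.
Proof.
move=> c0 Hk.
have [i1 E1] := Hk 2; have [i2 E2] := Hk 3.
have L1 : 2 ^ i1 < 2 ^ i2 by rewrite -E1 -E2; lia.
have L2 : 2 ^ i2 < 2 ^ i1.+1 by rewrite expnS -E1 -E2; lia.
rewrite ltn_exp2l // in L1; rewrite ltn_exp2l // in L2.
lia.
Qed.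

Theorem theorem3p13 :
  exists (Sigma : finType) (A : GAut (int * rat) Sigma),
    is_BS12_aut A /\ ~ context_free (BS12_lang A).
Proof.
exists unit, Aut; split; first exact: Aut_BS.
case=> g Hg.
set K := (Bd g) ^ #|nonterm g|.
have H1 : gen (start g) (2 ^ K).
  have := (Hg _).1 (complete K); rewrite /cfg_lang => /derives_genl.
  rewrite size_nseq => Hl; inversion Hl; subst.
  inversion H3; subst; by rewrite addn0.
case: ((main_dich g).1 _ _ H1) => [Hgp|[Y [d [c [l [c0 H1' H2 H3]]]]]].
  have := (gp_bound g).1 _ _ _ Hgp; rewrite cards0 subn0 -/K => B.
  have := ltn_expl K (isT : 1 < 2).
  by move=> A; have := leq_ltn_trans B A; rewrite ltnn.
apply: (@pow2_contra d c l c0) => k.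
have G1 := ctx_gen (ctx_pump k H2) H3.
have G2 := ctx_gen H1' G1.
have D := (gen_derives g).1 _ _ G2.
have := (Hg _).2 D; move/sound; rewrite size_nseq.
by [].
Qed.
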